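(* Fix $\alpha\in(0,1)$. In $\mathbb{Z}^4$, let $K=\{(x_1,x_2,0,0)\in\mathbb{Z}^4: x_1\ge0,\ |x_2|\le x_1^\alpha\}$ and $\Gamma=\mathbb{Z}^4\setminus K$, and equip $\mathbb{Z}^4$ with the lazy simple random walk (at each step stay put with probability $1/2$, otherwise move to one of the $8$ nearest neighbours, each with probability $1/16$). Then $\mathbb{Z}^4$ is $S$-transient with respect to $K$. Moreover, for every $\varepsilon\in(0,1)$ there is $L_\varepsilon>0$ such that $\psi_K(\mathbf{x})\le1-\varepsilon$ for all $\mathbf{x}\in\Gamma$ with $d_{\mathbf{x}}\ge|x_1^*|\ge L_\varepsilon$, where $d_{\mathbf{x}}:=d(\mathbf{x},K)$ and $\mathbf{x}^*=(x_1^*,x_2^*,x_3^*,x_4^* )\in K$ is a point achieving $d(\mathbf{x},K)$.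
   Context: $d$ is the graph (i.e. $\ell^1$) distance on $\mathbb{Z}^4$. $\psi_K(\mathbf{x})=\mathbb{P}^{\mathbf{x}}(\tau_K<\infty)$ where $\tau_K=\min\{n\ge0:X_n\in K\}$ for the lazy simple random walk $(X_n)$. $\mathbb{Z}^4$ is $S$-transient with respect to $K$ if there is a point $\mathbf{x}$ with $\psi_K(\mathbf{x})<1$. *)

(* Defs.v *)
From HB Require Import structures.
From mathcomp Require Import all_boot all_order all_algebra.
From mathcomp Require Import all_classical all_reals all_analysis.
Set Implicit Arguments. Unset Strict Implicit. Unset Printing Implicit Defensive.
Import Order.TTheory GRing.Theory Num.Theory.
Local Open Scope ring_scope.

(* Points of Z^4 are row vectors 'rV[int]_4; coordinate k (k = 0..3, i.e.
   x_{k+1} in the paper's 1-based numbering). *)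
Definition Z4 := 'rV[int]_4.
Definition crd (x : Z4) (k : nat) : int := x ord0 (inord k).

Definition dist (x y : Z4) : nat := (\sum_(i < 4) `|x ord0 i - y ord0 i|%N)%N.

Definition unitv (k : nat) : Z4 := delta_mx ord0 (inord k).

(* The 9 possible increments of the lazy simple random walk:
   index 0 = stay put; index 2k+1 = +e_k; index 2k+2 = -e_k (k = 0..3). *)
Definition lsrw_step (i : 'I_9) : Z4 :=
  if val i == 0%N then 0
  else if odd (val i) then unitv (val i).-1./2 else - unitv (val i).-1./2.

Definition weight (R : realType) (i : 'I_9) : R :=
  if val i == 0%N then 2^-1 else 16^-1.

Definition walk_pos n (x : Z4) (w : {ffun 'I_n -> 'I_9}) (k : nat) : Z4 :=
  x + \sum_(j < n | (val j < k)%N) lsrw_step (w j).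

(* P^x(tau_K <= n), computed on the finite path space of n increments:
   the sum, over all increment sequences, of their probability times the
   indicator that some X_k, 0 <= k <= n, lies in K. *)
Definition hit_prob (R : realType) (K : pred Z4) (n : nat) (x : Z4) : R :=
  \sum_(w : {ffun 'I_n -> 'I_9})
     (\prod_(j < n) weight R (w j)) *
     ([exists k : 'I_n.+1, K (walk_pos x w (val k))])%:R.

(* psi_K(x) = P^x(tau_K < oo) = sup_n P^x(tau_K <= n)  (continuity of measure). *)
Definition psi (R : realType) (K : pred Z4) (x : Z4) : R :=
  sup [set hit_prob R K n x | n in [set: nat]].

Definition S_transient (R : realType) (K : pred Z4) : Prop :=
  exists x : Z4, psi R K x < 1.

Definition Kset (R : realType) (alpha : R) : pred Z4 :=
  fun x => [&& crd x 2 == 0, crd x 3 == 0, (0 <= crd x 0)%R &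
             ((`|crd x 1|%:~R : R) <= powR ((crd x 0)%:~R) alpha)].

(* Main.v *)
Require Import Defs.
From HB Require Import structures.
From mathcomp Require Import all_boot all_order all_algebra.
From mathcomp Require Import all_classical all_reals all_analysis.
From mathcomp Require Import ring lra zify.
Set Implicit Arguments. Unset Strict Implicit. Unset Printing Implicit Defensive.
Import Order.TTheory GRing.Theory Num.Theory.
Local Open Scope ring_scope.
Section A.
Variable R : realType.

Definition fcons n (i : 'I_9) (w : {ffun 'I_n -> 'I_9}) : {ffun 'I_n.+1 -> 'I_9} :=
  [ffun j => if unlift ord0 j is Some j' then w j' else i].
Definition ftail n (w : {ffun 'I_n.+1 -> 'I_9}) : {ffun 'I_n -> 'I_9} :=
  [ffun j => w (lift ord0 j)].

Lemma fcons0 n i (w : {ffun 'I_n -> 'I_9}) : fcons i w ord0 = i.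
Proof. by rewrite ffunE unlift_none. Qed.
Lemma fconsS n i (w : {ffun 'I_n -> 'I_9}) j : fcons i w (lift ord0 j) = w j.
Proof. by rewrite ffunE liftK. Qed.

Lemma sum_ffunS n (F : {ffun 'I_n.+1 -> 'I_9} -> R) :
  \sum_w F w = \sum_(i : 'I_9) \sum_(w : {ffun 'I_n -> 'I_9}) F (fcons i w).
Proof.
rewrite pair_big /=.
rewrite (reindex (fun p : 'I_9 * {ffun 'I_n -> 'I_9} => fcons p.1 p.2)) //.
exists (fun w : {ffun 'I_n.+1 -> 'I_9} => (w ord0, ftail w)).
  by move=> [i w] _ /=; rewrite fcons0; congr pair; apply/ffunP => j; rewrite ffunE fconsS.
move=> w _ /=; apply/ffunP => j; rewrite ffunE.
by case: unliftP => [j'|] ->; rewrite ?ffunE.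
Qed.

Lemma prod_weight_sum n : \sum_(w : {ffun 'I_n -> 'I_9}) \prod_(j < n) weight R (w j) = 1.
Proof.
rewrite -(bigA_distr_bigA (fun (j : 'I_n) (i : 'I_9) => weight R i)) /=.
apply: big1 => j _.
rewrite !big_ord_recr big_ord0 /weight /=.
lra.
Qed.

Lemma walk_pos0 n x (w : {ffun 'I_n -> 'I_9}) : walk_pos x w 0 = x.
Proof. by rewrite /walk_pos big_pred0 ?addr0. Qed.

Lemma walk_posS n x i (w : {ffun 'I_n -> 'I_9}) k :
  walk_pos x (fcons i w) k.+1 = walk_pos (x + lsrw_step i) w k.
Proof.
rewrite /walk_pos big_mkcond big_ord_recl /= fcons0 -addrA; congr (_ + _).
rewrite [in RHS]big_mkcond; congr (_ + _); apply: eq_bigr => j _.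
by rewrite fconsS /bump /=.
Qed.

Lemma hit_prob0 K x : hit_prob R K 0 x = (K x)%:R.
Proof.
rewrite /hit_prob.
rewrite (eq_bigr (fun _ => (K x)%:R)); last first.
  move=> w _; rewrite big_ord0 mul1r; congr ((nat_of_bool _)%:R).
  apply/idP/idP => [/existsP [k]|Kx]; last by apply/existsP; exists ord0; rewrite walk_pos0.
  by rewrite (ord1 k) walk_pos0.
by rewrite sumr_const card_ffun !card_ord expn0.
Qed.

Lemma hit_probS K n x : hit_prob R K n.+1 x =
  if K x then 1 else \sum_(i : 'I_9) weight R i * hit_prob R K n (x + lsrw_step i).
Proof.
rewrite /hit_prob sum_ffunS.
have E : forall i (w : {ffun 'I_n -> 'I_9}),
  [exists k : 'I_n.+2, K (walk_pos x (fcons i w) (val k))] =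
  K x || [exists k : 'I_n.+1, K (walk_pos (x + lsrw_step i) w (val k))].
  move=> i w; apply/existsP/orP.
    move=> [k]; case: (unliftP ord0 k) => [k'|] ->.
      by rewrite /= /bump /= add1n walk_posS => H; right; apply/existsP; exists k'.
    by rewrite walk_pos0; left.
  case=> [Kx|/existsP [k Hk]]; first by exists ord0; rewrite walk_pos0.
  by exists (lift ord0 k); rewrite /= /bump /= add1n walk_posS.
case: (boolP (K x)) => Kx.
  rewrite -[RHS](prod_weight_sum n.+1) sum_ffunS.
  by apply: eq_bigr => i _; apply: eq_bigr => w _; rewrite E Kx /= mulr1.
apply: eq_bigr => i _; rewrite big_distrr /=; apply: eq_bigr => w _.
by rewrite E (negbTE Kx) /= big_ord_recl fcons0 mulrA; congr (_ * _ * _);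
  apply: eq_bigr => j _; rewrite fconsS.
Qed.

End A.
Section B.
Variable R : realType.

Lemma weight_ge0 i : 0 <= weight R i.
Proof. by rewrite /weight; case: ifP => _; rewrite invr_ge0 ler0n. Qed.

Lemma hit_le (K : pred Z4) (h : Z4 -> R) : (forall z, 0 <= h z) -> (forall z, K z -> 1 <= h z) ->
  (forall z, \sum_i weight R i * h (z + lsrw_step i) <= h z) ->
  forall n z, hit_prob R K n z <= h z.
Proof.
move=> h0 h1 hs; elim=> [|n IH] z.
  by rewrite hit_prob0; case: (boolP (K z)) => Kz /=; [exact: h1| exact: h0].
rewrite hit_probS; case: ifP => Kz; first exact: h1.
apply: le_trans (hs z); apply: ler_sum => i _; apply: ler_wpM2l => //.
exact: weight_ge0.
Qed.

Lemma hit_mono (K K' : pred Z4) n x :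
  (forall (w : {ffun 'I_n -> 'I_9}) (k : 'I_n.+1), K (walk_pos x w k) -> K' (walk_pos x w k)) ->
  hit_prob R K n x <= hit_prob R K' n x.
Proof.
move=> HK; apply: ler_sum => w _; apply: ler_wpM2l.
  by apply: prodr_ge0 => j _; exact: weight_ge0.
rewrite ler_nat; case E: [exists k : 'I_n.+1, K (walk_pos x w (val k))] => //=.
have -> // : [exists k : 'I_n.+1, K' (walk_pos x w (val k))].
by move/existsP: E => [k Hk]; apply/existsP; exists k; apply: HK.
Qed.

Lemma step_entry_le i (m : 'I_4) : `|lsrw_step i ord0 m| <= 1.
Proof.
rewrite /lsrw_step; case: ifP => _; first by rewrite mxE normr0.
by case: ifP => _; rewrite !mxE ?normrN; case: (_ && _); rewrite ?normr0 ?normr1.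
Qed.

Lemma walk_local n x (w : {ffun 'I_n -> 'I_9}) k (m : 'I_4) :
  `|walk_pos x w k ord0 m - x ord0 m| <= n%:Z.
Proof.
rewrite /walk_pos !mxE addrAC subrr add0r. rewrite summxE.
apply: le_trans (ler_norm_sum _ _ _) _.
apply: (@le_trans _ _ (\sum_(j < n) (1 : int))); last by rewrite sumr_const card_ord; lia.
rewrite big_mkcond /=; apply: ler_sum => j _; case: ifP => _ //; exact: step_entry_le.
Qed.

End B.
Section D1.
Variable R : realType.

Lemma pc (s a : R) : a ^+ 2 <= s - 2 ->
  1 / (s + 1 + 2 * a) + 1 / (s + 1 - 2 * a) <=
  (2 * ((s - 1) ^+ 2 + 8) + 8 * a ^+ 2) / (((s - 1) ^+ 2 + 8) * (s + 1)).
Proof.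
move=> ha.
have hp : 0 < s + 1 + 2 * a by nra.
have hq : 0 < s + 1 - 2 * a by nra.
have hB : 0 < (s - 1) ^+ 2 + 8 by nra.
have hs : 0 < s + 1 by nra.
have -> : 1 / (s + 1 + 2 * a) + 1 / (s + 1 - 2 * a) =
   (2 * (s + 1)) / ((s + 1) ^+ 2 - 4 * a ^+ 2).
  field; apply/andP; split; [ | apply/andP; split]; try apply/eqP; nra.
have hd : 0 < (s + 1) ^+ 2 - 4 * a ^+ 2 by nra.
rewrite ler_pdivrMr // mulrAC ler_pdivlMr; last by apply: mulr_gt0.
have h2 : 0 <= a ^+ 2 * (s - 2 - a ^+ 2) by apply: mulr_ge0; nra.
nra.
Qed.

End D1.
Section D2.
Variable R : realType.
Definition Nq (z : Z4) : R := \sum_(m < 4) ((z ord0 m)%:~R) ^+ 2.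
Definition gg (z : Z4) : R := 2 / (Nq z + 2).
Definition cr (z : Z4) (k : nat) : R := (z ord0 (inord k))%:~R.

Lemma Nq_expand z : Nq z = cr z 0 ^+ 2 + cr z 1 ^+ 2 + cr z 2 ^+ 2 + cr z 3 ^+ 2.
Proof.
rewrite /Nq /cr !big_ord_recr big_ord0 /= add0r.
have -> : (inord 0 : 'I_4) = widen_ord (leqnSn 3) (widen_ord (leqnSn 2) (widen_ord (leqnSn 1) ord_max)) by apply/val_inj; rewrite /= inordK.
have -> : (inord 1 : 'I_4) = widen_ord (leqnSn 3) (widen_ord (leqnSn 2) ord_max) by apply/val_inj; rewrite /= inordK.
have -> : (inord 2 : 'I_4) = widen_ord (leqnSn 3) ord_max by apply/val_inj; rewrite /= inordK.
have -> : (inord 3 : 'I_4) = ord_max by apply/val_inj; rewrite /= inordK.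
by [].
Qed.

Lemma Nq_unit z k (e : int) : (k < 4)%N -> (e = 1 \/ e = -1) ->
  Nq (z + e *: unitv k) = Nq z + 2 * e%:~R * cr z k + 1.
Proof.
move=> hk he; rewrite /Nq (bigD1 (inord k)) //= [in RHS](bigD1 (inord k)) //=.
rewrite !mxE !eqxx /= /cr.
have -> : \sum_(i < 4 | i != inord k) ((z + e *: unitv k) ord0 i)%:~R ^+ 2 =
          \sum_(i < 4 | i != inord k) ((z ord0 i)%:~R ^+ 2 : R).
  by apply: eq_bigr => i hi; rewrite !mxE /= (negbTE hi) /= mulr0 addr0.
rewrite mulr1 intrD.
case: he => ->; rewrite ?intrN /=. all: ring.
Qed.

End D2.
Section D3.
Variable R : realType.

Lemma pc' (s a : R) : a ^+ 2 <= s - 2 ->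
  (s + 1 + 2 * a)^-1 + (s + 1 - 2 * a)^-1 <=
  (2 * ((s - 1) ^+ 2 + 8) + 8 * a ^+ 2) / (((s - 1) ^+ 2 + 8) * (s + 1)).
Proof. by move=> h; have := pc h; rewrite !div1r. Qed.

Lemma comb (a0 a1 a2 a3 S : R) : S = a0 ^+ 2 + a1 ^+ 2 + a2 ^+ 2 + a3 ^+ 2 ->
  2^-1 * (2 / (S + 2)) +
  (16^-1 * (2 / (S + 2 + 1 + 2 * a0)) + (16^-1 * (2 / (S + 2 + 1 - 2 * a0)) +
  (16^-1 * (2 / (S + 2 + 1 + 2 * a1)) + (16^-1 * (2 / (S + 2 + 1 - 2 * a1)) +
  (16^-1 * (2 / (S + 2 + 1 + 2 * a2)) + (16^-1 * (2 / (S + 2 + 1 - 2 * a2)) +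
  (16^-1 * (2 / (S + 2 + 1 + 2 * a3)) + (16^-1 * (2 / (S + 2 + 1 - 2 * a3)) + 0))))))))
  <= 2 / (S + 2).
Proof.
move=> HS; set s := S + 2.
have hS : S = s - 2 by rewrite /s addrK.
have q0 : 0 <= a0 ^+ 2 by apply: sqr_ge0.
have q1 : 0 <= a1 ^+ 2 by apply: sqr_ge0.
have q2 : 0 <= a2 ^+ 2 by apply: sqr_ge0.
have q3 : 0 <= a3 ^+ 2 by apply: sqr_ge0.
have h0 := @pc' s a0 ltac:(rewrite -hS HS; lra).
have h1 := @pc' s a1 ltac:(rewrite -hS HS; lra).
have h2 := @pc' s a2 ltac:(rewrite -hS HS; lra).
have h3 := @pc' s a3 ltac:(rewrite -hS HS; lra).
set B := (s - 1) ^+ 2 + 8.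
have hs : 2 <= s by rewrite /s HS; lra.
have hB : 0 < B by rewrite /B; nra.
have hs1 : 0 < B * (s + 1) by apply: mulr_gt0 => //; lra.
have main : (2 * B + 8 * a0 ^+ 2) / (B * (s + 1)) + (2 * B + 8 * a1 ^+ 2) / (B * (s + 1)) +
   (2 * B + 8 * a2 ^+ 2) / (B * (s + 1)) + (2 * B + 8 * a3 ^+ 2) / (B * (s + 1)) <= 8 / s.
  rewrite -!mulrDl ler_pdivrMr // mulrAC ler_pdivlMr; last lra.
  have : a0 ^+ 2 + a1 ^+ 2 + a2 ^+ 2 + a3 ^+ 2 = s - 2 by rewrite -hS HS.
  rewrite /B; nra.
rewrite -/s.
have e : forall y : R, 2 / y = 2 * y^-1 by [].

have hsi : 0 < s^-1 by rewrite invr_gt0; lra.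
rewrite -/B in h0 h1 h2 h3.
lra.
Qed.
End D3.
Section D4.
Variable R : realType.
Lemma gg_p z k : (k < 4)%N -> gg R (z + unitv k) = 2 / (Nq R z + 2 + 1 + 2 * cr R z k).
Proof.
move=> hk; rewrite /gg -[unitv k]scale1r (Nq_unit _ _ hk); last by left.
by congr (_ / _); rewrite /=; ring.
Qed.
Lemma gg_m z k : (k < 4)%N -> gg R (z - unitv k) = 2 / (Nq R z + 2 + 1 - 2 * cr R z k).
Proof.
move=> hk; rewrite /gg -scaleN1r (Nq_unit _ _ hk); last by right.
by congr (_ / _); rewrite /= ?intrN; ring.
Qed.

Lemma gg_super z : \sum_i weight R i * gg R (z + lsrw_step i) <= gg R z.
Proof.
rewrite !big_ord_recl big_ord0 /=.
rewrite /lsrw_step /weight /= addr0 !gg_p // !gg_m //.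
exact: comb (Nq_expand R z).
Qed.

Lemma gg_ge0 z : 0 <= gg R z.
Proof. by rewrite /gg Nq_expand; apply: divr_ge0 => //; rewrite addr_ge0 // ?addr_ge0 ?sqr_ge0. Qed.
Lemma gg0 : gg R 0 = 1.
Proof. by rewrite /gg /Nq big1 ?add0r ?divff // => i _; rewrite mxE expr0n. Qed.
End D4.
Lemma sum4 (V : nmodType) (F : 'I_4 -> V) :
  \sum_i F i = F (inord 0) + F (inord 1) + F (inord 2) + F (inord 3).
Proof.
rewrite !big_ord_recr big_ord0 /= add0r.
have -> : (inord 0 : 'I_4) = widen_ord (leqnSn 3) (widen_ord (leqnSn 2) (widen_ord (leqnSn 1) ord_max)) by apply/val_inj; rewrite /= inordK.
have -> : (inord 1 : 'I_4) = widen_ord (leqnSn 3) (widen_ord (leqnSn 2) ord_max) by apply/val_inj; rewrite /= inordK.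
have -> : (inord 2 : 'I_4) = widen_ord (leqnSn 3) ord_max by apply/val_inj; rewrite /= inordK.
have -> : (inord 3 : 'I_4) = ord_max by apply/val_inj; rewrite /= inordK.
by [].
Qed.

Lemma dist_ge k x y : (k < 4)%N -> (`|crd x k - crd y k|%N <= dist x y)%N.
Proof. by move=> hk; rewrite /dist (bigD1 (inord k)) //=; exact: leq_addr. Qed.

Lemma dist_expand x y : dist x y = (`|crd x 0 - crd y 0|%N + `|crd x 1 - crd y 1|%N +
   `|crd x 2 - crd y 2|%N + `|crd x 3 - crd y 3|%N)%N.
Proof. by rewrite /dist sum4. Qed.

Section E2.
Variable R : realType.

Lemma gg_dist x y : (0 < dist x y)%N -> gg R (x - y) <= 8 / ((dist x y)%:R ^+ 2).
Proof.
move=> hD.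
have eN : Nq R (x - y) = ((crd x 0 - crd y 0)%:~R) ^+ 2 + ((crd x 1 - crd y 1)%:~R) ^+ 2
   + ((crd x 2 - crd y 2)%:~R) ^+ 2 + ((crd x 3 - crd y 3)%:~R) ^+ 2.
  by rewrite Nq_expand /cr !mxE.
have eD : ((dist x y)%:R : R) = `|(crd x 0 - crd y 0)%:~R| + `|(crd x 1 - crd y 1)%:~R|
   + `|(crd x 2 - crd y 2)%:~R| + `|(crd x 3 - crd y 3)%:~R|.
  by rewrite dist_expand !natrD !natr_absz !intr_norm.
have hD' : (0 : R) < (dist x y)%:R by rewrite ltr0n.
rewrite /gg eN; rewrite eD in hD' *.
set a0 := (crd x 0 - crd y 0)%:~R; set a1 := (crd x 1 - crd y 1)%:~R.
set a2 := (crd x 2 - crd y 2)%:~R; set a3 := (crd x 3 - crd y 3)%:~R.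
rewrite -(real_normK (num_real a0)) -(real_normK (num_real a1)).
rewrite -(real_normK (num_real a2)) -(real_normK (num_real a3)).
have n0 := normr_ge0 a0; have n1 := normr_ge0 a1.
have n2 := normr_ge0 a2; have n3 := normr_ge0 a3.
set b0 := `|a0| in n0 hD' *; set b1 := `|a1| in n1 hD' *.
set b2 := `|a2| in n2 hD' *; set b3 := `|a3| in n3 hD' *.
have hpos : 0 < b0 ^+ 2 + b1 ^+ 2 + b2 ^+ 2 + b3 ^+ 2 + 2 by nra.
rewrite ler_pdivrMr // mulrAC ler_pdivlMr ?exprn_gt0 //.
have : 0 <= (b0 - b1) ^+ 2 + (b0 - b2) ^+ 2 + (b0 - b3) ^+ 2 + (b1 - b2) ^+ 2
   + (b1 - b3) ^+ 2 + (b2 - b3) ^+ 2 by rewrite !addr_ge0 ?sqr_ge0.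
nra.
Qed.
End E2.
Definition pt (a b : int) : Z4 :=
  \row_(m < 4) (if val m == 0%N then a else if val m == 1%N then b else 0).

Lemma crd_pt a b k : (k < 4)%N -> crd (pt a b) k = if k == 0%N then a else if k == 1%N then b else 0.
Proof. by move=> hk; rewrite /crd mxE /= inordK. Qed.

Lemma Z4_eq (y z : Z4) : (forall k, (k < 4)%N -> crd y k = crd z k) -> y = z.
Proof.
move=> H; apply/matrixP => i m; rewrite [i]ord1.
by have := H m (ltn_ord m); rewrite /crd inord_val.
Qed.

Lemma count_nat (N a b : nat) : (\sum_(j < N) ((a <= j) && (j < b) : nat) = minn N b - a)%N.
Proof.
elim: N => [|N IH]; first by rewrite big_ord0 min0n.
rewrite big_ord_recr /= IH.
case: (leqP a N) => h1; case: (ltnP N b) => h2 /=; lia.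
Qed.

Section E3.
Variable R : realType.

Lemma sum_ge_term (I : finType) (F : I -> R) i0 : (forall i, 0 <= F i) -> F i0 <= \sum_i F i.
Proof.
move=> H; rewrite (bigD1 i0) //= lerDl; apply: sumr_ge0 => i _; exact: H.
Qed.

Lemma super_comb (I : finType) (c : I -> R) (p : I -> Z4) z : (forall i, 0 <= c i) ->
  \sum_s weight R s * (\sum_i c i * gg R (z + lsrw_step s - p i)) <=
  \sum_i c i * gg R (z - p i).
Proof.
move=> hc.
under eq_bigr do rewrite big_distrr /=.
rewrite exchange_big /=; apply: ler_sum => i _.
under eq_bigr do rewrite mulrCA.
rewrite -big_distrr /=; apply: ler_wpM2l => //.
under eq_bigr do rewrite addrAC.
exact: gg_super.
Qed.

End E3.
Section E1.
Variable R : realType.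
Variable alpha : R.
Hypothesis ha0 : 0 < alpha.
Hypothesis ha1 : alpha < 1.
Let be : R := 1 - alpha.
Let hb0 : 0 < be. Proof. move: ha0 ha1 => ? ?; rewrite /be; lra. Qed.
Let hb1 : be < 1. Proof. move: ha0 ha1 => ? ?; rewrite /be; lra. Qed.

Lemma bernoulli (u : R) : 0 <= u -> u <= 1 -> powR (1 - u) be <= 1 - be * u.
Proof.
move=> u0 u1.
have := @conjugate_powR R (powR (1 - u) be) 1 (be^-1) ((1 - be)^-1) (powR_ge0 _ _) ler01.
rewrite invr_gt0 hb0 invr_gt0 subr_gt0 hb1 !invrK => /(_ isT isT).
rewrite addrC subrK => /(_ erefl).
rewrite mulr1 -powRrM divff ?gt_eqF // powRr1 ?subr_ge0 // powR1.
move=> H; apply: le_trans H _; rewrite /= -/be.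
move: hb0 hb1 => ? ?; nra.
Qed.

Definition qq (t : R) := powR t be.

Lemma qq_gt0 t : 0 < t -> 0 < qq t.
Proof. by move=> t0; rewrite /qq powR_gt0. Qed.

Lemma pow_split t : 0 < t -> powR t alpha * qq t = t.
Proof.
move=> t0; rewrite /qq -powRD; last by rewrite (gt_eqF t0) implybT.
have -> : alpha + be = 1 by rewrite /be; ring.
by rewrite powRr1 // ltW.
Qed.

Lemma tele_term t : 2 <= t -> powR t alpha / t ^+ 2 <= be^-1 * ((qq (t - 1))^-1 - (qq t)^-1).
Proof.
move=> t2.
have t0 : 0 < t by lra.
have hQ := qq_gt0 t0.
have hQ1 : 0 < qq (t - 1) by apply: qq_gt0; lra.
have hP := pow_split t0.
have hb : qq (t - 1) <= (1 - be * t^-1) * qq t.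
  have -> : t - 1 = (1 - t^-1) * t by field; rewrite gt_eqF.
  rewrite /qq powRM; last by lra.
    apply: ler_wpM2r; first exact: powR_ge0.
    apply: bernoulli; first by rewrite invr_ge0 ltW.
    by rewrite invf_le1 //; lra.
  rewrite subr_ge0 invf_le1 //; lra.
set Q := qq t in hQ hb hP *; set Q1 := qq (t - 1) in hQ1 hb *.
set P := powR t alpha in hP *.
have hb' : Q1 * t <= (t - be) * Q.
  have : Q1 * t <= (1 - be * t^-1) * Q * t by rewrite ler_pM2r.
  have -> : (1 - be * t^-1) * Q * t = (t - be) * Q by field; rewrite gt_eqF.
  done.
have -> : be^-1 * (Q1^-1 - Q^-1) = (Q - Q1) / (be * Q * Q1).
  by field; rewrite !gt_eqF.
have hbQ : 0 < be * Q * Q1 by rewrite !mulr_gt0.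
rewrite ler_pdivrMr ?exprn_gt0 // mulrAC ler_pdivlMr //.
move: hb0 hb1 => ? ?.
have : P * Q * (be * Q1) = t * (be * Q1) by rewrite hP.
nra.
Qed.

Lemma qq_mono (u v : R) : 0 <= u -> u <= v -> qq u <= qq v.
Proof.
move=> u0 uv; rewrite /qq; apply: ge0_ler_powR => //; first exact: ltW hb0.
by rewrite nnegrE (le_trans u0 uv).
Qed.

Lemma powa_mono (u v : R) : 0 <= u -> u <= v -> powR u alpha <= powR v alpha.
Proof.
move=> u0 uv; apply: ge0_ler_powR => //; first exact: ltW ha0.
by rewrite nnegrE (le_trans u0 uv).
Qed.

Lemma qq_le (D : R) : 1 <= D -> qq D <= D.
Proof. by move=> D1; apply: ler1_powR => //; exact: ltW hb1. Qed.

Lemma div_sq_le (c a b : R) : 0 <= c -> 0 < a -> a <= b -> c / b ^+ 2 <= c / a ^+ 2.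
Proof.
move=> c0 a0 ab.
rewrite ler_pdivrMr ?exprn_gt0 //; last by apply: lt_le_trans ab.
have h : 0 <= b ^+ 2 - a ^+ 2 by rewrite subr_ge0; nra.
have := mulr_ge0 c0 h.
rewrite mulrAC ler_pdivlMr ?exprn_gt0 //; nra.
Qed.

Lemma near_bound (D : R) : 1 <= D ->
  (4 * D + 1) * ((2 * powR (4 * D) alpha + 1) * (8 / D ^+ 2)) <= 360 / qq D.
Proof.
move=> D1.
have D0 : 0 < D by lra.
have hQ := qq_gt0 D0.
have hQD := qq_le D1.
have h4 : 0 < 4 * D by lra.
have hsp := pow_split h4.
have hq4 : qq D <= qq (4 * D) by apply: qq_mono; lra.
set P := powR (4 * D) alpha in hsp *.
set Q := qq D in hQ hQD hq4 *.
have P0 : 0 <= P by exact: powR_ge0.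
have hPQ : P * Q <= 4 * D.
  by rewrite -hsp; apply: ler_wpM2l.
rewrite !mulrA ler_pdivrMr ?exprn_gt0 // [X in _ <= X]mulrAC ler_pdivlMr //.
nra.
Qed.

Lemma far_term (t : nat) : (2 <= t)%N ->
  (2 * powR t%:R alpha + 1) * (32 / t%:R ^+ 2) <= 96 / be * ((qq (t.-1)%:R)^-1 - (qq t%:R)^-1).
Proof.
move=> t2.
have t2' : (2 : R) <= t%:R by rewrite (ler_nat R 2 t).
have p1 : 1 <= powR t%:R alpha.
  have t1 : (1 : R) <= t%:R by lra.
  by have := @ler_powR R t%:R t1 0 alpha (ltW ha0); rewrite powRr0.
have := tele_term t2'.
have -> : (t.-1)%:R = t%:R - 1 :> R by rewrite -subn1 natrB //; apply: leq_trans t2.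
move=> H.
have t0 : (0 : R) < t%:R ^+ 2 by rewrite exprn_gt0 //; lra.
apply: le_trans (_ : 96 * (powR t%:R alpha / t%:R ^+ 2) <= _).
  have iv0 : 0 <= (t%:R ^+ 2 : R)^-1 by rewrite invr_ge0 ltW.
  have hp : 0 <= powR t%:R alpha - 1 by lra.
  have := mulr_ge0 hp iv0.
  set iv := (t%:R ^+ 2 : R)^-1; set p := powR t%:R alpha.
  nra.
rewrite -mulrA; apply: ler_wpM2l => //.
Qed.

Lemma near_sum (d : nat) : (1 <= d)%N ->
  \sum_(0 <= t < 4 * d + 1) (2 * powR t%:R alpha + 1) * (8 / (d%:R : R) ^+ 2) <= 360 / qq d%:R.
Proof.
move=> d1.
have hd1 : (1 : R) <= d%:R by rewrite ler1n.
apply: le_trans (near_bound hd1).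
apply: (@le_trans _ _ (\sum_(0 <= t < 4 * d + 1) (2 * powR (4 * d%:R) alpha + 1) * (8 / (d%:R : R) ^+ 2))).
  apply: ler_sum_nat => t /andP [_ ht].
  apply: ler_wpM2r; first by apply: divr_ge0 => //; apply: sqr_ge0.
  rewrite lerD2r ler_pM2l //; apply: powa_mono => //.
  by rewrite -natrM ler_nat; lia.
rewrite sumr_const_nat subn0 -(mulr_natl _ (4 * d + 1)).
by have -> : ((4 * d + 1)%N%:R : R) = 4 * d%:R + 1 by rewrite natrD natrM.
Qed.

Lemma far_sum (d T : nat) : (1 <= d)%N -> (4 * d + 1 <= T)%N ->
  \sum_(4 * d + 1 <= t < T) (2 * powR t%:R alpha + 1) * (32 / (t%:R : R) ^+ 2)
  <= 96 / be * (qq d%:R)^-1.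
Proof.
move=> d1 hT.
pose u := fun k : nat => - (qq (k.-1)%:R)^-1.
apply: (@le_trans _ _ (\sum_(4 * d + 1 <= t < T) 96 / be * (u t.+1 - u t))).
  apply: ler_sum_nat => t /andP [ht _].
  have -> : u t.+1 - u t = (qq (t.-1)%:R)^-1 - (qq t%:R)^-1 by rewrite /u /= opprK addrC.
  apply: far_term; lia.
rewrite -big_distrr /= telescope_sumr //.
apply: ler_wpM2l; first by apply: divr_ge0 => //; exact: ltW hb0.
rewrite /u.
have h1 : 0 < qq (T.-1)%:R by apply: qq_gt0; rewrite ltr0n; lia.
have h0 : 0 < qq d%:R by apply: qq_gt0; rewrite ltr0n.
have h2 : qq d%:R <= qq ((4 * d + 1).-1)%:R.
  by apply: qq_mono; [rewrite ler0n | rewrite ler_nat; lia].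
have h3 : (qq ((4 * d + 1).-1)%:R)^-1 <= (qq d%:R)^-1.
  by rewrite lef_pV2 ?posrE //; apply: lt_le_trans h2.
have h4 : 0 < (qq (T.-1)%:R)^-1 by rewrite invr_gt0.
move: h3 h4; set A := (qq (T.-1)%:R)^-1; set B := (qq ((4 * d + 1).-1)%:R)^-1.
move=> h3 h4; lra.
Qed.

End E1.

Section F5.
Variable R : realType.
Variable alpha : R.
Hypothesis ha0 : 0 < alpha.
Hypothesis ha1 : alpha < 1.

Lemma Kset_pt (a b : int) : Kset alpha (pt a b) = (0 <= a) && (`|b|%:~R <= powR a%:~R alpha).
Proof. by rewrite /Kset !crd_pt //= !eqxx. Qed.

Lemma main_bound x xs n : Kset alpha xs ->
  (forall y, Kset alpha y -> (dist x xs <= dist x y)%N) ->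
  (`|crd xs 0| <= dist x xs)%N -> (0 < dist x xs)%N ->
  hit_prob R (Kset alpha) n x <= (360 + 96 / (1 - alpha)) / qq alpha (dist x xs)%:R.
Proof.
move=> Kxs Hmin Hxs0 d0.
set d := dist x xs in Hmin Hxs0 d0 *.
have Hx0 : (`|crd x 0 - crd xs 0| <= d)%N by apply: dist_ge.
set T := (`|crd x 0|%N + `|crd x 1|%N + n + 4 * d).+1.
pose K' := fun z : Z4 => Kset alpha z && [forall m : 'I_4, `|z ord0 m - x ord0 m| <= n%:Z].
pose P := fun (p : 'I_T * 'I_(2 * T).+1) => pt (p.1 : nat)%:Z ((p.2 : nat)%:Z - T%:Z).
pose h := fun z => \sum_p (K' (P p))%:R * gg R (z - P p).
have step1 : hit_prob R (Kset alpha) n x <= hit_prob R K' n x.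
  apply: hit_mono => w k Kz; rewrite /K' Kz /=; apply/forallP => m; exact: walk_local.
have step2 : hit_prob R K' n x <= h x.
  apply: hit_le => [z|z|z].
  - by apply: sumr_ge0 => p _; rewrite mulr_ge0 ?gg_ge0.
  - move=> K'z; move: (K'z) => /andP [Kz /forallP Hm].
    move: (Kz); rewrite /Kset => /and4P [/eqP z2 /eqP z3 z0 _].
    have h0 : `|crd z 0 - crd x 0| <= n%:Z := Hm (inord 0).
    have h1 : `|crd z 1 - crd x 1| <= n%:Z := Hm (inord 1).
    have ht : (`|crd z 0|%N < T)%N by rewrite /T; lia.
    have hj : (absz (crd z 1 + T%:Z)%R < (2 * T).+1)%N by rewrite /T; lia.
    pose p0 : 'I_T * 'I_(2 * T).+1 := (Ordinal ht, Ordinal hj).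
    have eP : P p0 = z.
      apply: Z4_eq => k hk; rewrite /P /= crd_pt //.
      case: k hk => [|[|[|[|k]]]] //= _; try lia.
    have := @sum_ge_term R _ (fun p => (K' (P p))%:R * gg R (z - P p)) p0.
    move=> /(_ (fun p => mulr_ge0 (ler0n _ _) (gg_ge0 _ _))).
    by rewrite /= eP subrr gg0 mulr1 K'z.
  - rewrite /h; apply: le_trans (super_comb _ _ _) _ => //.
have hd1 : (1 : R) <= d%:R by rewrite ler1n.
set D := (d%:R : R) in hd1 *.
pose b := fun t : nat => if (t <= 4 * d)%N then 8 / D ^+ 2 else 32 / (t%:R : R) ^+ 2.
have b0 : forall t, 0 <= b t.
  by move=> t; rewrite /b; case: ifP => _; apply: divr_ge0 => //; apply: sqr_ge0.
have tb : forall y t, Kset alpha y -> crd y 0 = t%:Z -> gg R (x - y) <= b t.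
  move=> y t Ky ey.
  have hD := Hmin y Ky.
  have hy0 : (`|crd x 0 - crd y 0| <= dist x y)%N by apply: dist_ge.
  have Dy0 : (0 < dist x y)%N by apply: leq_trans hD.
  apply: le_trans (@gg_dist R x y Dy0) _.
  rewrite /b; case: ifP => ht.
    by apply: div_sq_le => //; [rewrite ltr0n | rewrite ler_nat].
  have htD : (t <= 2 * dist x y)%N by rewrite ey in hy0; lia.
  have dn0 : (dist x y)%:R != 0 :> R by rewrite pnatr_eq0 -lt0n.
  rewrite (_ : 8 / _ = 32 / (2 * (dist x y)%:R) ^+ 2); last by field.
  apply: div_sq_le => //; first by rewrite ltr0n; lia.
  by rewrite -(natrM R 2) ler_nat.
have cnt : forall t : nat,
   \sum_(j < (2 * T).+1) (Kset alpha (pt t%:Z (j%:Z - T%:Z)))%:R * gg R (x - pt t%:Z (j%:Z - T%:Z))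
   <= (2 * powR t%:R alpha + 1) * b t.
  move=> t.
  set p := powR t%:R alpha.
  set m := absz (Num.floor p).
  have f0 : 0 <= Num.floor p by rewrite floor_ge0 powR_ge0.
  have mp : (m%:R : R) <= p by rewrite natr_absz ger0_norm // floor_le.
  apply: (@le_trans _ _ (\sum_(j < (2 * T).+1) ((T - m <= j) && (j < T + m + 1))%N%:R * b t)).
    apply: ler_sum => j _.
    case Kj: (Kset alpha _) => /=; last by rewrite mul0r mulr_ge0 ?ler0n ?b0.
    move: (Kj); rewrite Kset_pt => /andP [_ hs].
    have hjT : `|j%:Z - T%:Z| <= Num.floor p by rewrite floor_ge_int.
    have -> : ((T - m <= j) && (j < T + m + 1))%N by apply/andP; split; lia.
    rewrite !mul1r; apply: tb => //.
    by rewrite crd_pt.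
  rewrite -big_distrl /= -natr_sum count_nat.
  apply: ler_wpM2r => //.
  have hc : (minn (2 * T).+1 (T + m + 1) - (T - m) <= 2 * m + 1)%N by lia.
  apply: le_trans (_ : ((2 * m + 1)%N%:R : R) <= _); first by rewrite ler_nat.
  by rewrite natrD natrM /=; lra.
have hT : (4 * d + 1 <= T)%N by rewrite /T; lia.
have step3 : h x <= \sum_(t < T) (2 * powR (val t)%:R alpha + 1) * b t.
  apply: (@le_trans _ _ (\sum_p (Kset alpha (P p))%:R * gg R (x - P p))).
    apply: ler_sum => p _; apply: ler_wpM2r; first exact: gg_ge0.
    by rewrite ler_nat /K'; case: (Kset alpha (P p)) => //=; rewrite leq_b1.
  have -> : \sum_p (Kset alpha (P p))%:R * gg R (x - P p) =
     \sum_(t < T) \sum_(j < (2 * T).+1) (Kset alpha (P (t, j)))%:R * gg R (x - P (t, j)).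
    by rewrite pair_bigA; apply: eq_bigr => [[t j]] _.
  by apply: ler_sum => t _; apply: cnt.
rewrite -(big_mkord xpredT (fun t => (2 * powR t%:R alpha + 1) * b t)) in step3.
rewrite (big_cat_nat _ (n := (4 * d + 1)%N)) //= in step3.
have hnear : \sum_(0 <= t < 4 * d + 1) (2 * powR t%:R alpha + 1) * b t <= 360 / qq alpha D.
  apply: le_trans (near_sum ha0 ha1 d0).
  apply: ler_sum_nat => t /andP [_ ht].
  by rewrite /b ifT //; lia.
have hfar : \sum_(4 * d + 1 <= t < T) (2 * powR t%:R alpha + 1) * b t
    <= 96 / (1 - alpha) * (qq alpha D)^-1.
  apply: le_trans (far_sum ha0 ha1 d0 hT).
  apply: ler_sum_nat => t /andP [ht _].
  by rewrite /b ifF //; lia.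
apply: le_trans step1 _; apply: le_trans step2 _; apply: le_trans step3 _.
rewrite mulrDl; exact: lerD.
Qed.

End F5.

Lemma part2 (R : realType) (alpha : R) (ha0 : 0 < alpha) (ha1 : alpha < 1) :
  forall eps : R, 0 < eps -> eps < 1 ->
  exists L : R, 0 < L /\
    forall x xs : Z4,
      ~~ Kset alpha x ->
      Kset alpha xs ->
      (forall y : Z4, Kset alpha y -> (dist x xs <= dist x y)%N) ->
      (`|crd xs 0| <= dist x xs)%N ->
      L <= (`|crd xs 0|%N)%:R ->
      psi R (Kset alpha) x <= 1 - eps.
Proof.
move=> eps e0 e1.
set C := 360 + 96 / (1 - alpha).
have hb : 0 < 1 - alpha by rewrite subr_gt0.
have C0 : 0 < C by rewrite /C addr_gt0 // divr_gt0.
have del0 : 0 < 1 - eps by rewrite subr_gt0.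
set M := powR (C / (1 - eps)) (1 - alpha)^-1.
have M0 : 0 <= M by apply: powR_ge0.
exists (M + 1); split; first by rewrite ltr_wpDl.
move=> x xs _ Kxs Hmin Hxs0 HL.
have Hd : (M + 1 : R) <= (dist x xs)%:R by apply: le_trans HL _; rewrite ler_nat.
have d0 : (0 < dist x xs)%N by rewrite -(ltr0n R); apply: lt_le_trans Hd; rewrite ltr_wpDl.
have hq : C / (1 - eps) <= qq alpha (dist x xs)%:R.
  have -> : C / (1 - eps) = qq alpha M.
    rewrite /qq /M -powRrM mulVf ?gt_eqF // powRr1 //.
    by rewrite divr_ge0 // ltW.
  apply: (qq_mono ha0 ha1 M0); apply: le_trans _ Hd; by rewrite lerDl.
have hq0 : 0 < qq alpha (dist x xs)%:R by apply: lt_le_trans hq; rewrite divr_gt0.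
rewrite /psi; apply: ge_sup.
  by exists (hit_prob R (Kset alpha) 0 x), 0%N.
move=> r [n _ <-].
apply: le_trans (main_bound ha0 ha1 n Kxs Hmin Hxs0 d0) _.
by rewrite -/C ler_pdivrMr // mulrC -ler_pdivrMr //.
Qed.

Unset Implicit Arguments.
Unset Strict Implicit.

Theorem lemma3p30 (R : realType) (alpha : R) (ha0 : 0 < alpha) (ha1 : alpha < 1) :
  S_transient R (Kset alpha) /\
  forall eps : R, 0 < eps -> eps < 1 ->
  exists L : R, 0 < L /\
    forall x xs : Z4,
      ~~ Kset alpha x ->
      Kset alpha xs ->
      (forall y : Z4, Kset alpha y -> (dist x xs <= dist x y)%N) ->
      (`|crd xs 0| <= dist x xs)%N ->
      L <= (`|crd xs 0|%N)%:R ->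
      psi R (Kset alpha) x <= 1 - eps.
Proof.
split; last exact: part2.
have h2a : (0 : R) < 2^-1 by rewrite invr_gt0.
have h2b : (2^-1 : R) < 1 by rewrite invf_lt1 //; lra.
have [L [L0 HL]] := part2 ha0 ha1 h2a h2b.
set N := (absz (Num.floor L)).+1.
have hN : L <= N%:R.
  have := floorD1_gt L; have f0 : 0 <= Num.floor L by rewrite floor_ge0 ltW.
  rewrite /N -natr1 natr_absz ger0_norm // intrD => h; exact: ltW.
pose x : Z4 := \row_(m < 4) (if val m == 1%N then 0 else N%:Z).
pose xs : Z4 := pt N%:Z 0.
have cx : forall k, (k < 4)%N -> crd x k = if k == 1%N then 0 else N%:Z.
  by move=> k hk; rewrite /crd mxE /= inordK.
have Kxs : Kset alpha xs by rewrite Kset_pt normr0 /= powR_ge0.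
have Kx : ~~ Kset alpha x by rewrite /Kset cx.
have dxs : dist x xs = (2 * N)%N.
  by rewrite dist_expand !cx // !crd_pt //=; lia.
exists x.
apply: le_lt_trans (HL x xs Kx Kxs _ _ _) _.
- move=> y Ky; rewrite dxs dist_expand !cx //=.
  move: Ky; rewrite /Kset => /and4P [/eqP -> /eqP -> _ _]; lia.
- by rewrite dxs crd_pt //=; lia.
- by rewrite crd_pt //=.
- lra.
Qed.
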